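(* Let $\alpha=(\alpha_1,\dots,\alpha_n)$ and $\beta=(\beta_1,\dots,\beta_n)$ be two probability vectors on $n$ points (in the paper $\alpha_i=P_F(u_i\mid s)$, $\beta_i=P_F(v_i\mid s')$), and let $\mathbf{C}'\in\mathbb{R}^{n\times n}$ be a diagonal matrix with $\mathbf{C}'_{ii}\le 0$ for all $i$. Then $$\min_{\pi\in\Pi(\alpha,\beta)}\langle\mathbf{C}',\pi\rangle=\sum_{i=1}^n\min(\alpha_i,\beta_i)\,\mathbf{C}'_{ii},$$ where $\Pi(\alpha,\beta)=\{\pi\in\mathbb{R}_{+}^{n\times n}:\pi\mathbf{1}_n=\alpha,\ \pi^{\top}\mathbf{1}_n=\beta\}$ and $\langle\mathbf{C}',\pi\rangle=\sum_{i,j}\mathbf{C}'_{ij}\pi_{ij}$. *)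

(* Defs.v *)
From mathcomp Require Import all_boot all_order all_algebra.
Set Implicit Arguments. Unset Strict Implicit. Unset Printing Implicit Defensive.
Import Order.TTheory GRing.Theory Num.Theory.
Local Open Scope ring_scope.

Definition prob_vec (R : realFieldType) (n : nat) (a : 'I_n -> R) : Prop :=
  (forall i, 0 <= a i) /\ \sum_(i < n) a i = 1.

Definition coupling (R : realFieldType) (n : nat) (a b : 'I_n -> R)
  (p : 'M[R]_n) : Prop :=
  (forall i j, 0 <= p i j) /\
  (forall i, \sum_(j < n) p i j = a i) /\
  (forall j, \sum_(i < n) p i j = b j).

Definition frob (R : realFieldType) (n : nat) (C p : 'M[R]_n) : R :=
  \sum_(i < n) \sum_(j < n) C i j * p i j.

(* Main.v *)
Require Import Defs.
From mathcomp Require Import all_boot all_order all_algebra.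
Import Order.TTheory GRing.Theory Num.Theory.
Local Open Scope ring_scope.

Lemma frob_diag (R : realFieldType) (n : nat) (C p : 'M[R]_n) :
  (forall i j : 'I_n, i != j -> C i j = 0) ->
  frob C p = \sum_(i < n) C i i * p i i.
Proof.
move=> HC; apply: eq_bigr => i _.
rewrite (bigD1 i) //= big1 ?addr0 // => j ji.
by rewrite HC ?mul0r // eq_sym.
Qed.

Theorem lemma1 (R : realFieldType) (n : nat) (alpha beta : 'I_n -> R)
  (C : 'M[R]_n) :
  prob_vec alpha -> prob_vec beta ->
  (forall i j : 'I_n, i != j -> C i j = 0) ->
  (forall i : 'I_n, C i i <= 0) ->
  (exists p : 'M[R]_n, coupling alpha beta p /\
     frob C p = \sum_(i < n) Num.min (alpha i) (beta i) * C i i) /\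
  (forall p : 'M[R]_n, coupling alpha beta p ->
     \sum_(i < n) Num.min (alpha i) (beta i) * C i i <= frob C p).
Proof.
move=> [a0 a1] [b0 b1] HC Hd.
set m := fun i => Num.min (alpha i) (beta i).
have ma i : m i <= alpha i by rewrite /m ge_min lexx.
have mb i : m i <= beta i by rewrite /m ge_min lexx orbT.
set s := 1 - \sum_(i < n) m i.
have sa : \sum_(i < n) (alpha i - m i) = s by rewrite sumrB a1.
have sb : \sum_(i < n) (beta i - m i) = s by rewrite sumrB b1.
have s0 : 0 <= s by rewrite -sa; apply: sumr_ge0 => i _; rewrite subr_ge0.
have key : forall (x : 'I_n -> R), (forall i, 0 <= x i) ->
    \sum_(i < n) x i = s -> forall i, x i * (s / s) = x i.
  move=> x x0 xs i; have [e|sn0] := eqVneq s 0.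
    move: xs; rewrite e => /eqP; rewrite psumr_eq0 // => /allP H.
    by have /eqP -> := H i (mem_index_enum i); rewrite mul0r.
  by rewrite divff // mulr1.
have zero i : (alpha i - m i) * (beta i - m i) = 0.
  rewrite /m; case: (leP (alpha i) (beta i)) => h.
    by rewrite subrr mul0r.
  by rewrite subrr mulr0.
split.
  exists (\matrix_(i, j) ((i == j)%:R * m i + (alpha i - m i) * (beta j - m j) / s)).
  split; last first.
    rewrite frob_diag //; apply: eq_bigr => i _.
    by rewrite mxE eqxx mul1r zero mul0r addr0 mulrC.
  split; [|split].
  - move=> i j; rewrite mxE; apply: addr_ge0.
      by apply: mulr_ge0; [exact: ler0n | by rewrite /m le_min a0 b0].
    by apply: divr_ge0 => //; apply: mulr_ge0; rewrite subr_ge0.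
  - move=> i; under eq_bigr do rewrite mxE.
    rewrite big_split /= (bigD1 i) //= eqxx mul1r big1 ?addr0; last first.
      by move=> j /negbTE; rewrite eq_sym => ->; rewrite mul0r.
    rewrite -mulr_suml -mulr_sumr sb -mulrA.
    rewrite (key _ _ sa i); first by rewrite addrC subrK.
    by move=> k; rewrite subr_ge0.
  - move=> j; under eq_bigr do rewrite mxE.
    rewrite big_split /= (bigD1 j) //= eqxx mul1r big1 ?addr0; last first.
      by move=> i /negbTE ->; rewrite mul0r.
    rewrite -mulr_suml -mulr_suml sa [_ * (_ - _)]mulrC -mulrA.
    rewrite (key _ _ sb j); first by rewrite addrC subrK.
    by move=> k; rewrite subr_ge0.
move=> p [p0 [pr pc]]; rewrite frob_diag //.
apply: ler_sum => i _; rewrite mulrC; apply: ler_wnM2l => //.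
rewrite /m le_min; apply/andP; split.
  by rewrite -(pr i) (bigD1 i) //= lerDl; apply: sumr_ge0.
by rewrite -(pc i) (bigD1 i) //= lerDl; apply: sumr_ge0.
Qed.
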